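(* Let $\rho\colon\mathcal{F}\to[\Lambda]^\omega$ with $\mathcal{F}\subseteq[\Omega]^\omega$ be a partition regular function. (1) If $\rho\in(S_2)$, then $\rho\in(S_1)$. (2) For every ideal $\mathcal{I}$ on a countably infinite set $\Lambda$, the function $\rho_{\mathcal{I}}$ belongs to $(S_2)$. (3) If $\rho\in P^-$ and $\rho$ has small accretions, then $\rho\in(S_2)$.
   Context: An ideal on a nonempty set $X$ is a family $\mathcal{I}\subseteq\mathcal{P}(X)$ with $\emptyset\in\mathcal{I}$, $X\notin\mathcal{I}$, closed under finite unions and subsets, and containing all finite subsets of $X$; $\mathcal{I}^+=\mathcal{P}(X)\setminus\mathcal{I}$. $[A]^\omega$ denotes the countably infinite subsets of $A$, $[A]^{<\omega}$ the finite subsets. Partition regular function: $\Lambda,\Omega$ are countably infinite sets, $\mathcal{F}$ is a nonempty family of infinite subsets of $\Omega$ with $F\setminus K\in\mathcal{F}$ for all $F\in\mathcal{F}$ and finite $K\subseteq\Omega$. A function $\rho\colon\mathcal{F}\to[\Lambda]^\omega$ is partition regular if (M) $E\subseteq F$ implies $\rho(E)\subseteq\rho(F)$ for $E,F\in\mathcal{F}$; (R) whenever $F\in\mathcal{F}$ and $\rho(F)=A\cup B$ with $A,B\subseteq\Lambda$, there is $E\in\mathcal{F}$ with $\rho(E)\subseteq A$ or $\rho(E)\subseteq B$; (S) for every $E\in\mathcal{F}$ there is $F\in\mathcal{F}$ with $F\subseteq E$ such that for every $a\in\rho(F)$ there is a finite $K\subseteq\Omega$ with $a\notin\rho(F\setminus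 K)$. Put $\mathcal{I}_\rho=\{A\subseteq\Lambda:\forall F\in\mathcal{F}\ \rho(F)\not\subseteq A\}$ (an ideal on $\Lambda$). For an ideal $\mathcal{I}$ on $\Lambda$, $\rho_{\mathcal{I}}\colon\mathcal{I}^+\to[\Lambda]^\omega$ is $\rho_{\mathcal{I}}(A)=A$ (here $\Omega=\Lambda$, $\mathcal{F}=\mathcal{I}^+$). $\rho$ has small accretions if for every $E\in\mathcal{F}$ there is $F\in\mathcal{F}$ with $F\subseteq E$ such that $\rho(F)\setminus\rho(F\setminus K)\in\mathcal{I}_\rho$ for every finite $K\subseteq\Omega$. $\rho\in P^-$ means: for every decreasing sequence $A_0\supseteq A_1\supseteq\dots$ of subsets of $\Lambda$ with $A_0\notin\mathcal{I}_\rho$ and $A_n\setminus A_{n+1}\in\mathcal{I}_\rho$ for all $n$, there is $F\in\mathcal{F}$ with $\rho(F)\subseteq A_0$ such that for each $n$ there is a finite $K\subseteq\Omega$ with $\rho(F\setminus K)\subseteq A_n$. $\rho\in(S_1)$ means: for every $E\in\mathcal{F}$ there is $F\in\mathcal{F}$, $F\subseteq E$, such that for every $A\in\mathcal{I}_\rho$ there is $G\in\mathcal{F}$ with $\rho(G)\subseteq\rho(F)\setminus A$ and for every finite $K\subseteq\Omega$ there is a finite $L\subseteq\Omega$ with $\rho(G\setminus L)\subseteq\rho(F\setminus K)$. $\rho\in(S_2)$ means: for every $E\in\mathcal{F}$ there is $F\in\mathcal{F}$, $F\subseteq E$, such that for every $B\subseteq\rho(F)$ with $B\notin\mathcal{I}_\rho$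 there is $G\in\mathcal{F}$ with $\rho(G)\subseteq B$ and for every finite $K\subseteq\Omega$ there is a finite $L\subseteq\Omega$ with $\rho(G\setminus L)\subseteq\rho(F\setminus K)$. *)

(* Defs.v *)
From mathcomp Require Import all_boot.
From mathcomp Require Import boolp classical_sets cardinality.
Set Implicit Arguments. Unset Strict Implicit. Unset Printing Implicit Defensive.
Local Open Scope classical_set_scope.

Definition countably_infinite (T : Type) : Prop :=
  countable [set: T] /\ infinite_set [set: T].

Definition ideal (X : Type) (I : set (set X)) : Prop :=
  I set0 /\ ~ I [set: X] /\
  (forall A B, I A -> I B -> I (A `|` B)) /\
  (forall A B, A `<=` B -> I B -> I A) /\
  (forall A, finite_set A -> I A).

(* rho : F -> [Lambda]^omega, represented as a total map on set Omega of which
   only the values on members of F matter. *)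
Section PRF.
Variables (Lam Om : Type) (F : set (set Om)) (rho : set Om -> set Lam).

Definition partition_regular : Prop :=
  (exists E, F E) /\
  (forall E, F E -> infinite_set E) /\
  (forall E K, F E -> finite_set K -> F (E `\` K)) /\
  (forall E, F E -> infinite_set (rho E)) /\
  (forall E G, F E -> F G -> E `<=` G -> rho E `<=` rho G) /\
  (* (R) *)
  (forall E A B, F E -> rho E = A `|` B ->
     exists G, F G /\ (rho G `<=` A \/ rho G `<=` B)) /\
  (forall E, F E -> exists G, F G /\ G `<=` E /\
     forall a, rho G a -> exists K, finite_set K /\ ~ rho (G `\` K) a).

Definition I_rho : set (set Lam) := fun A => forall E, F E -> ~ (rho E `<=` A).

Definition small_accretions : Prop :=
  forall E, F E -> exists G, F G /\ G `<=` E /\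
    forall K, finite_set K -> I_rho (rho G `\` rho (G `\` K)).

Definition P_minus : Prop :=
  forall A : nat -> set Lam,
    (forall n, A n.+1 `<=` A n) -> ~ I_rho (A 0) ->
    (forall n, I_rho (A n `\` A n.+1)) ->
    exists G, F G /\ rho G `<=` A 0 /\
      forall n, exists K, finite_set K /\ rho (G `\` K) `<=` A n.

Definition S1 : Prop :=
  forall E, F E -> exists G, F G /\ G `<=` E /\
    forall A, I_rho A -> exists H, F H /\ rho H `<=` rho G `\` A /\
      forall K, finite_set K -> exists L, finite_set L /\
        rho (H `\` L) `<=` rho (G `\` K).

Definition S2 : Prop :=
  forall E, F E -> exists G, F G /\ G `<=` E /\
    forall B, B `<=` rho G -> ~ I_rho B -> exists H, F H /\ rho H `<=` B /\
      forall K, finite_set K -> exists L, finite_set L /\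
        rho (H `\` L) `<=` rho (G `\` K).
End PRF.

Definition Iplus (Lam : Type) (I : set (set Lam)) : set (set Lam) := fun A => ~ I A.
Definition rho_I (Lam : Type) (A : set Lam) : set Lam := A.

(* Main.v *)
Require Import Defs.
From mathcomp Require Import all_boot.
From mathcomp Require Import boolp classical_sets cardinality.
Set Implicit Arguments. Unset Strict Implicit. Unset Printing Implicit Defensive.
Local Open Scope classical_set_scope.

Lemma nat_bounded (K : set nat) : finite_set K -> exists n, forall x, K x -> (x < n)%N.
Proof.
move=> /finite_seqP[s ->]; exists (foldr maxn 0 s).+1.
elim: s => [//|a s IH] x /=; rewrite inE => /orP[/eqP->|xs].
  by rewrite ltnS leq_maxl.
by apply: leq_trans (IH x xs) _; rewrite ltnS leq_maxr.
Qed.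

Lemma I_rho_union (Lam Om : Type) (F : set (set Om)) (rho : set Om -> set Lam) :
  partition_regular F rho -> forall X Y, I_rho F rho X -> I_rho F rho Y ->
  I_rho F rho (X `|` Y).
Proof.
move=> [_ [_ [_ [_ [_ [R _]]]]]] X Y IX IY E FE sub.
have eq : rho E = (rho E `&` X) `|` (rho E `&` Y).
  by rewrite -setIUr; apply/esym/setIidl.
have [G [FG [h|h]]] := R _ _ _ FE eq.
  by apply: (IX G FG) => x /h [].
by apply: (IY G FG) => x /h [].
Qed.

Lemma part1 (Lam Om : Type) (F : set (set Om)) (rho : set Om -> set Lam) :
  partition_regular F rho -> S2 F rho -> S1 F rho.
Proof.
move=> pr s2 E FE; have [G [FG [GE HG]]] := s2 E FE.
exists G; split => //; split => // A IA.
have nI : ~ I_rho F rho (rho G `\` A).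
  move=> I1; apply: (I_rho_union pr I1 IA FG).
  move=> x Gx; case: (pselect (A x)) => Ax; [by right|by left].
have [H [FH [HB HK]]] := HG (rho G `\` A) (fun x (h : (rho G `\` A) x) => h.1) nI.
by exists H.
Qed.

Lemma part2 (Lam : Type) (I : set (set Lam)) :
  ideal I -> S2 (Iplus I) (@rho_I Lam).
Proof.
move=> [_ [_ [_ [Isub _]]]] E FE; exists E; split => //; split => // B BE nB.
have FB : Iplus I B.
  move=> IB; apply: nB => E' FE' sub; apply: FE'; exact: Isub sub IB.
exists B; split => //; split => // K fK; exists K; split => //.
by rewrite /rho_I => x [Bx Kx]; split => //; apply: BE.
Qed.

Lemma part3 (Lam Om : Type) (F : set (set Om)) (rho : set Om -> set Lam) :
  countably_infinite Om ->
  partition_regular F rho -> P_minus F rho -> small_accretions F rho ->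
  S2 F rho.
Proof.
move=> [/countable_injP[f finj] _] pr Pm sa.
have [_ [_ [FD [_ [M _]]]]] := pr.
have finjT : injective f by move=> x y fxy; apply: finj; rewrite ?inE.
pose Kn n := f @^-1` [set m | (m < n)%N].
have fKn n : finite_set (Kn n).
  apply: finite_preimage; first by move=> x y _ _; apply: finjT.
  apply: (@sub_finite_set _ _ `I_n) => //.
move=> E FE; have [G [FG [GE HG]]] := sa E FE.
exists G; split => //; split => // B BG nB.
pose A n := B `&` rho (G `\` Kn n).
have A0 : A 0 = B.
  apply/seteqP; split => [x [] //|x Bx]; split => //.
  have -> : G `\` Kn 0 = G by apply/seteqP; split => [y [] //|y Gy]; split.
  exact: BG.
have Adec n : A n.+1 `<=` A n.
  move=> x [Bx rx]; split => //. apply: (M (G `\` Kn n.+1)); [exact: FD|exact: FD| |exact: rx].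
  by move=> y [Gy Ky]; split => //; move=> Kn'; apply: Ky; rewrite /Kn /=; apply: ltnW.
have AI n : I_rho F rho (A n `\` A n.+1).
  move=> E' FE' sub; apply: (HG _ (fKn n.+1) E' FE') => x /sub [[Bx rx] nA].
  by split; [apply: BG|move=> r; apply: nA].
have [H [FH [HA0 HL]]] := Pm A Adec ltac:(by rewrite A0) AI.
exists H; split => //; split; first by rewrite -A0.
move=> K fK.
have [n hn] := nat_bounded (finite_image f fK).
have [L [fL HLn]] := HL n; exists L; split => //.
move=> x /HLn [_ rx]; apply: (M (G `\` Kn n)) => //; try exact: FD.
by move=> y [Gy Ky]; split => // Ky'; apply: Ky; apply: hn; exists y.
Qed.

Theorem proposition2p6 :
  (forall (Lam Om : Type) (F : set (set Om)) (rho : set Om -> set Lam),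
     countably_infinite Lam -> countably_infinite Om ->
     partition_regular F rho -> S2 F rho -> S1 F rho) /\
  (forall (Lam : Type) (I : set (set Lam)),
     countably_infinite Lam -> ideal I -> S2 (Iplus I) (@rho_I Lam)) /\
  (forall (Lam Om : Type) (F : set (set Om)) (rho : set Om -> set Lam),
     countably_infinite Lam -> countably_infinite Om ->
     partition_regular F rho -> P_minus F rho -> small_accretions F rho ->
     S2 F rho).
Proof.
split; first by move=> *; apply: part1.
split; first by move=> *; apply: part2.
by move=> Lam Om F rho _ cO pr Pm sa; apply: part3.
Qed.
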